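(* Let $\mathcal T$ be a triangulated category admitting a finitistic generator. Then every object of $\mathcal T$ is homologically finite.
   Context: $\Sigma$ denotes the suspension. For objects $X,Y$ and $n\ge0$, write $h(X,Y)\le n$ if for all $i,j\in\mathbb Z$: $\operatorname{Hom}(X,\Sigma^iY)\ne0\ne\operatorname{Hom}(X,\Sigma^jY)$ implies $|i-j|<n$; $\hom^n(X):=\{Y\mid h(X,Y)\le n\}$. An object $X$ is homologically finite if for every $Y\in\mathcal T$ there is $n\ge 0$ with $h(X,Y)\le n$. With $\operatorname{add}\mathcal X$ the smallest full subcategory containing $\mathcal X$ closed under finite direct sums and summands, set $\operatorname{thick}^0(X)=\operatorname{add}\varnothing$, $\operatorname{thick}^1(X)=\operatorname{add}\{\Sigma^iX\mid i\in\mathbb Z\}$, and for $n>1$, $\operatorname{thick}^n(X)=\operatorname{add}\{\operatorname{cone}\varphi\mid\varphi\colon U\to V,\ U\in\operatorname{thick}^1(X),\ V\in\operatorname{thick}^{n-1}(X)\}$. An object $X$ is a finitistic generator of $\mathcal T$ if $X$ is homologically finite and $\hom^p(X)\subseteq\operatorname{thick}^p(X)$ for all $p\ge0$. *)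

(* Defs.v *)
From HB Require Import structures.
From mathcomp Require Import all_boot all_order all_algebra.
Set Implicit Arguments. Unset Strict Implicit. Unset Printing Implicit Defensive.
Import GRing.Theory Num.Theory.
Local Open Scope ring_scope.

Record TriangulatedCategory := TriCat {
  Obj :> Type;
  Hom : Obj -> Obj -> zmodType;
  comp : forall X Y Z : Obj, Hom Y Z -> Hom X Y -> Hom X Z;
  idm : forall X : Obj, Hom X X;
  compA : forall (W X Y Z : Obj) (h : Hom Y Z) (g : Hom X Y) (f : Hom W X),
      comp h (comp g f) = comp (comp h g) f;
  comp1m : forall (X Y : Obj) (f : Hom X Y), comp (idm Y) f = f;
  compm1 : forall (X Y : Obj) (f : Hom X Y), comp f (idm X) = f;
  compDl : forall (X Y Z : Obj) (g g' : Hom Y Z) (f : Hom X Y),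
      comp (g + g') f = comp g f + comp g' f;
  compDr : forall (X Y Z : Obj) (g : Hom Y Z) (f f' : Hom X Y),
      comp g (f + f') = comp g f + comp g f';
  zero_exists : exists Z : Obj, idm Z = 0;
  biprod_exists : forall X Y : Obj, exists (B : Obj) (i1 : Hom X B) (i2 : Hom Y B)
      (p1 : Hom B X) (p2 : Hom B Y),
      [/\ comp p1 i1 = idm X, comp p2 i2 = idm Y, comp p1 i2 = 0,
          comp p2 i1 = 0 & comp i1 p1 + comp i2 p2 = idm B];
  Sh : Obj -> Obj;
  shm : forall X Y : Obj, Hom X Y -> Hom (Sh X) (Sh Y);
  shm_comp : forall (X Y Z : Obj) (g : Hom Y Z) (f : Hom X Y),
      shm (comp g f) = comp (shm g) (shm f);
  shm_id : forall X : Obj, shm (idm X) = idm (Sh X);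
  shm_add : forall (X Y : Obj) (f g : Hom X Y), shm (f + g) = shm f + shm g;
  shm_bij : forall X Y : Obj, bijective (@shm X Y);
  Shi : Obj -> Obj;
  Shi_iso : forall X : Obj, exists (f : Hom (Sh (Shi X)) X) (g : Hom X (Sh (Shi X))),
      comp g f = idm _ /\ comp f g = idm _;
  dist : forall X Y Z : Obj, Hom X Y -> Hom Y Z -> Hom Z (Sh X) -> Prop;
  dist_iso : forall (X Y Z X' Y' Z' : Obj)
      (f : Hom X Y) (g : Hom Y Z) (h : Hom Z (Sh X))
      (f' : Hom X' Y') (g' : Hom Y' Z') (h' : Hom Z' (Sh X'))
      (u : Hom X X') (v : Hom Y Y') (w : Hom Z Z'),
      (exists u', comp u' u = idm X /\ comp u u' = idm X') ->
      (exists v', comp v' v = idm Y /\ comp v v' = idm Y') ->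
      (exists w', comp w' w = idm Z /\ comp w w' = idm Z') ->
      comp v f = comp f' u -> comp w g = comp g' v -> comp (shm u) h = comp h' w ->
      dist f g h -> dist f' g' h';
  dist_id : forall X Z : Obj, idm Z = 0 -> dist (idm X) (0 : Hom X Z) (0 : Hom Z (Sh X));
  dist_ext : forall (X Y : Obj) (f : Hom X Y),
      exists (Z : Obj) (g : Hom Y Z) (h : Hom Z (Sh X)), dist f g h;
  dist_rot : forall (X Y Z : Obj) (f : Hom X Y) (g : Hom Y Z) (h : Hom Z (Sh X)),
      dist f g h <-> dist g h (- shm f);
  dist_morph : forall (X Y Z X' Y' Z' : Obj)
      (f : Hom X Y) (g : Hom Y Z) (h : Hom Z (Sh X))
      (f' : Hom X' Y') (g' : Hom Y' Z') (h' : Hom Z' (Sh X'))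
      (u : Hom X X') (v : Hom Y Y'),
      dist f g h -> dist f' g' h' -> comp v f = comp f' u ->
      exists w : Hom Z Z', comp w g = comp g' v /\ comp (shm u) h = comp h' w;
  dist_oct : forall (X Y Z Z' X' Y' : Obj) (f : Hom X Y) (g : Hom Y Z)
      (i1 : Hom Y Z') (j1 : Hom Z' (Sh X))
      (i2 : Hom Z X') (j2 : Hom X' (Sh Y))
      (i3 : Hom Z Y') (j3 : Hom Y' (Sh X)),
      dist f i1 j1 -> dist g i2 j2 -> dist (comp g f) i3 j3 ->
      exists (u : Hom Z' Y') (v : Hom Y' X'),
        [/\ dist u v (comp (shm i1) j2),
            comp u i1 = comp i3 g, comp j3 u = j1,
            comp v i3 = i2 & comp j2 v = comp (shm f) j3]
}.

Arguments comp {t X Y Z}.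
Arguments idm {t}.
Arguments Sh {t}.
Arguments Shi {t}.
Arguments shm {t X Y}.
Arguments dist {t X Y Z}.

Section Defs.
Variable T : TriangulatedCategory.

Definition Shpow (i : int) (X : T) : T :=
  match i with
  | Posz n => iter n Sh X
  | Negz n => iter n.+1 Shi X
  end.

Definition hom_nonzero (X Y : T) : Prop := exists f : Hom X Y, f != 0.

Definition h_le (X Y : T) (n : nat) : Prop :=
  forall i j : int, hom_nonzero X (Shpow i Y) -> hom_nonzero X (Shpow j Y) ->
    (`|i - j| < n)%N.

Definition homn (n : nat) (X : T) : T -> Prop := fun Y => h_le X Y n.

Definition homologically_finite (X : T) : Prop :=
  forall Y : T, exists n : nat, h_le X Y n.

Definition is_zero_obj (Z : T) : Prop := idm Z = 0.

Definition is_biproduct (B X Y : T) : Prop :=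
  exists (i1 : Hom X B) (i2 : Hom Y B) (p1 : Hom B X) (p2 : Hom B Y),
    [/\ comp p1 i1 = idm X, comp p2 i2 = idm Y, comp p1 i2 = 0,
        comp p2 i1 = 0 & comp i1 p1 + comp i2 p2 = idm B].

Definition is_summand (Y Z : T) : Prop :=
  exists (s : Hom Y Z) (r : Hom Z Y), comp r s = idm Y.

Inductive add (P : T -> Prop) : T -> Prop :=
  | add_base X : P X -> add P X
  | add_zero Z : is_zero_obj Z -> add P Z
  | add_sum B X Y : add P X -> add P Y -> is_biproduct B X Y -> add P B
  | add_summand Y Z : add P Z -> is_summand Y Z -> add P Y.

Definition is_cone (U V : T) (phi : Hom U V) (W : T) : Prop :=
  exists (g : Hom V W) (h : Hom W (Sh U)), dist phi g h.

Fixpoint thick (n : nat) (X : T) : T -> Prop :=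
  match n with
  | 0 => add (fun _ => False)
  | 1 => add (fun Y => exists i : int, Y = Shpow i X)
  | S ((S m') as m) => add (fun W => exists (U V : T) (phi : Hom U V),
                   add (fun Y => exists i : int, Y = Shpow i X) U /\
                   thick m X V /\ is_cone phi W)
  end.

Definition finitistic_generator (X : T) : Prop :=
  homologically_finite X /\
  forall (p : nat) (Y : T), homn p X Y -> thick p X Y.

End Defs.

(* Main.v *)
From Pilot Require Import Defs.
From mathcomp Require Import all_boot all_order all_algebra.
From mathcomp Require Import zify.
From Stdlib Require Import Classical.
Import Pilot.Defs.
Set Implicit Arguments. Unset Strict Implicit. Unset Printing Implicit Defensive.
Import GRing.Theory.
Local Open Scope ring_scope.

Lemma comp0l (T : TriangulatedCategory) (X Y Z : T) (f : Hom X Y) :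
  comp (0 : Hom Y Z) f = 0.
Proof.
have := compDl (0 : Hom Y Z) 0 f; rewrite addr0 => H.
by move/(congr1 (fun y => y - comp (0 : Hom Y Z) f)): H; rewrite subrr addrK.
Qed.

Lemma comp0r (T : TriangulatedCategory) (X Y Z : T) (g : Hom Y Z) :
  comp g (0 : Hom X Y) = 0.
Proof.
have := compDr g (0 : Hom X Y) 0; rewrite addr0 => H.
by move/(congr1 (fun y => y - comp g (0 : Hom X Y))): H; rewrite subrr addrK.
Qed.

Lemma compNl (T : TriangulatedCategory) (X Y Z : T) (g : Hom Y Z) (f : Hom X Y) :
  comp (- g) f = - comp g f.
Proof. by apply/eqP; rewrite -addr_eq0 -compDl addNr comp0l. Qed.

Lemma shm0 (T : TriangulatedCategory) (X Y : T) : shm (0 : Hom X Y) = 0.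
Proof.
have := shm_add (0 : Hom X Y) 0; rewrite addr0 => H.
by move/(congr1 (fun y => y - shm (0 : Hom X Y))): H; rewrite subrr addrK.
Qed.

Definition Iso (T : TriangulatedCategory) (A B : T) :=
  exists (f : Hom A B) (g : Hom B A), comp g f = idm A /\ comp f g = idm B.

Lemma Iso_sym (T : TriangulatedCategory) (A B : T) : Iso A B -> Iso B A.
Proof. by case=> f [g [H1 H2]]; exists g, f. Qed.

Lemma Iso_refl (T : TriangulatedCategory) (A : T) : Iso A A.
Proof. by exists (idm A), (idm A); rewrite comp1m. Qed.

Lemma nz_iso_r (T : TriangulatedCategory) (A B B' : T) :
  Iso B B' -> hom_nonzero A B -> hom_nonzero A B'.
Proof.
case=> u [v [H1 H2]] [f Hf]; exists (comp u f); apply/eqP => E.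
move/eqP: Hf; apply; by rewrite -[f]comp1m -H1 -compA E comp0r.
Qed.

Lemma nz_iso_l (T : TriangulatedCategory) (A A' B : T) :
  Iso A A' -> hom_nonzero A B -> hom_nonzero A' B.
Proof.
case=> u [v [H1 H2]] [f Hf]; exists (comp f v); apply/eqP => E.
move/eqP: Hf; apply; by rewrite -[f]compm1 -H1 compA E comp0l.
Qed.

Lemma nz_sh (T : TriangulatedCategory) (A B : T) :
  hom_nonzero A B <-> hom_nonzero (Sh A) (Sh B).
Proof.
have [k Hk1 Hk2] := shm_bij A B.
split.
- case=> f Hf; exists (shm f); apply/eqP => E; move/eqP: Hf; apply.
  by rewrite -(Hk1 f) E -(shm0 A B) Hk1.
- case=> g Hg; exists (k g); apply/eqP => E; move/eqP: Hg; apply.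
  by rewrite -(Hk2 g) E shm0.
Qed.

Lemma Sh_Shpow (T : TriangulatedCategory) (Y : T) (i : int) :
  Iso (Sh (Shpow i Y)) (Shpow (i + 1) Y).
Proof.
case: i => n.
- have -> : Posz n + 1 = Posz n.+1 by lia.
  exact: Iso_refl.
- case: n => [|m].
  + have -> : Negz 0 + 1 = Posz 0 by lia.
    by have [f [g [H1 H2]]] := Shi_iso Y; exists f, g.
  + have -> : Negz m.+1 + 1 = Negz m by lia.
    by have [f [g [H1 H2]]] := Shi_iso (iter m.+1 Shi Y); exists f, g.
Qed.

Definition P (T : TriangulatedCategory) (Y A : T) (i : int) :=
  hom_nonzero A (Shpow i Y).

Lemma P_Sh (T : TriangulatedCategory) (Y A : T) (i : int) :
  P Y (Sh A) i -> P Y A (i - 1).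
Proof.
move=> H; apply/nz_sh; apply: nz_iso_r H; apply: Iso_sym.
by have := Sh_Shpow Y (i - 1); rewrite subrK.
Qed.

Lemma P_Shi (T : TriangulatedCategory) (Y A : T) (i : int) :
  P Y (Shi A) i -> P Y A (i + 1).
Proof.
move/nz_sh => H; apply: nz_iso_r (Sh_Shpow Y i) _.
apply: nz_iso_l H; by have [f [g [H1 H2]]] := Shi_iso A; exists f, g.
Qed.

Definition bnd (T : TriangulatedCategory) (Y A : T) :=
  exists n : nat, forall i, P Y A i -> (absz i <= n)%N.

Lemma bnd_Sh (T : TriangulatedCategory) (Y A : T) : bnd Y A -> bnd Y (Sh A).
Proof.
case=> n Hn; exists n.+1 => i /P_Sh /Hn; lia.
Qed.

Lemma bnd_Shi (T : TriangulatedCategory) (Y A : T) : bnd Y A -> bnd Y (Shi A).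
Proof.
case=> n Hn; exists n.+1 => i /P_Shi /Hn; lia.
Qed.

Lemma bnd_Shpow (T : TriangulatedCategory) (Y A : T) (k : int) :
  bnd Y A -> bnd Y (Shpow k A).
Proof.
move=> H; case: k => n /=.
- elim: n => [|n IH] //=; exact: bnd_Sh.
- elim: n => [|n IH] /=; [exact: bnd_Shi| exact: bnd_Shi].
Qed.

Lemma bnd_zero (T : TriangulatedCategory) (Y Z : T) : is_zero_obj Z -> bnd Y Z.
Proof.
move=> HZ; exists 0%N => i [f Hf]; exfalso; move/eqP: Hf; apply.
by rewrite -[f]compm1 HZ comp0r.
Qed.

Lemma bnd_summand (T : TriangulatedCategory) (Y A B : T) :
  is_summand A B -> bnd Y B -> bnd Y A.
Proof.
case=> s [r Hrs] [n Hn]; exists n => i [f Hf]; apply: Hn.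
exists (comp f r); apply/eqP => E; move/eqP: Hf; apply.
by rewrite -[f]compm1 -Hrs compA E comp0l.
Qed.

Lemma bnd_biprod (T : TriangulatedCategory) (Y B X1 X2 : T) :
  is_biproduct B X1 X2 -> bnd Y X1 -> bnd Y X2 -> bnd Y B.
Proof.
case=> i1 [i2 [p1 [p2 [_ _ _ _ Hid]]]] [n1 H1] [n2 H2].
exists (n1 + n2)%N => i [f Hf].
have E : f = comp (comp f i1) p1 + comp (comp f i2) p2.
  by rewrite -!compA -compDr Hid compm1.
case: (eqVneq (comp f i1) 0) => E1.
- case: (eqVneq (comp f i2) 0) => E2.
  + by exfalso; move/eqP: Hf; apply; rewrite E E1 E2 !comp0l addr0.
  + have := H2 i (ex_intro (fun k => k != 0) _ E2); lia.
- have := H1 i (ex_intro (fun k => k != 0) _ E1); lia.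
Qed.

Lemma exact_cone (T : TriangulatedCategory) (U V W Z : T) (phi : Hom U V)
  (g : Hom V W) (h : Hom W (Sh U)) (f : Hom W Z) :
  dist phi g h -> comp f g = 0 -> exists t : Hom (Sh U) Z, f = comp t h.
Proof.
move=> D Hfg.
have [O HO] := zero_exists T.
have D1 := proj1 (@dist_rot T _ _ _ phi g h) D.
have D2 := dist_id (Shi Z) HO.
have D3 := proj1 (dist_rot _ _ _) (proj1 (dist_rot (idm (Shi Z)) _ _) D2).
have [f0 [g0 [Hgf Hfg0]]] := Shi_iso Z.
have [w [Hw1 Hw2]] := dist_morph D1 D3 (u := 0 : Hom V O) (v := comp g0 f)
   (ltac:(by rewrite -compA Hfg !comp0r)).
exists (comp f0 (- w)).
rewrite -(compA f0); rewrite compNl Hw1 compNl shm_id comp1m opprK.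
by rewrite compA Hfg0 comp1m.
Qed.

Lemma bnd_cone (T : TriangulatedCategory) (Y U V W : T) (phi : Hom U V) :
  is_cone phi W -> bnd Y U -> bnd Y V -> bnd Y W.
Proof.
case=> g [h D] [n1 H1] [n2 H2].
exists (n1.+1 + n2)%N => i [f Hf].
case: (eqVneq (comp f g) 0) => E.
- have [t Ht] := exact_cone D E.
  have Ht0 : t != 0 by apply/eqP => E'; move/eqP: Hf; apply; rewrite Ht E' comp0l.
  have := H1 _ (P_Sh (ex_intro (fun k => k != 0) _ Ht0)); lia.
- have := H2 i (ex_intro (fun k => k != 0) _ E); lia.
Qed.

Lemma bnd_add (T : TriangulatedCategory) (Y : T) (Q : T -> Prop) :
  (forall A, Q A -> bnd Y A) -> forall A, add Q A -> bnd Y A.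
Proof.
move=> HQ A; elim => {A}.
- by move=> A /HQ.
- by move=> Z /bnd_zero.
- by move=> B X1 X2 _ H1 _ H2 Hb; exact: bnd_biprod Hb H1 H2.
- by move=> A B _ HB Hs; exact: bnd_summand Hs HB.
Qed.

Lemma bnd_thick (T : TriangulatedCategory) (Y G : T) :
  bnd Y G -> forall p A, thick p G A -> bnd Y A.
Proof.
move=> HG.
have H1 : forall A, thick 1 G A -> bnd Y A.
  by apply: bnd_add => A [i ->]; exact: bnd_Shpow.
elim=> [|p IH].
- by apply: bnd_add.
- case: p IH => [|m] IH; first exact: H1.
  apply: bnd_add => W [U [V [phi [HU [HV Hc]]]]].
  exact: bnd_cone Hc (H1 _ HU) (IH _ HV).
Qed.

Theorem mainTheorem3 (T : TriangulatedCategory) :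
  (exists G : T, finitistic_generator G) ->
  forall X : T, homologically_finite X.
Proof.
case=> G [HfG Hth] X Y.
have HGY : bnd Y G.
  have [n Hn] := HfG Y.
  case: (classic (exists i0, P Y G i0)) => [[i0 Hi0]|Hno].
  - exists (n + absz i0)%N => i Hi; have := Hn _ _ Hi Hi0; lia.
  - by exists 0%N => i Hi; exfalso; apply: Hno; exists i.
have [n Hn] := HfG X.
have [m Hm] := bnd_thick HGY (Hth n X Hn).
exists (m + m + 1)%N => i j Hi Hj.
have := Hm _ Hi; have := Hm _ Hj; lia.
Qed.
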